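(* Let $G$ be a graph, let $S$ be a minimal separator of $G$, let $\mu$ be a probability measure on $S$, and let $\alpha<1$ be a constant such that $\mu(N(v))<\alpha$ for every $v\in V(G)$. Let $A$ and $B$ be two full components of $G\setminus S$. If two vertices $x,y\in S$ are chosen independently at random according to $\mu$, then the probability that $(x,y)$ is not lucky with respect to $A$ is less than $6\alpha$ (and likewise with respect to $B$).
   Context: All graphs are finite, simple and undirected. $N(v)$ is the open neighbourhood of $v$ and $\mu(N(v))$ means $\mu(N(v)\cap S)$. For distinct $s,t\in V(G)$, $S$ is an $s$-$t$ separator if $s,t$ lie in different components of $G\setminus S$, minimal if no proper subset is an $s$-$t$ separator; $S$ is a minimal separator of $G$ if it is a minimal $s$-$t$ separator for some $s,t$. A component $C$ of $G\setminus S$ is full if every vertex of $S$ has a neighbour in $C$. A vertex $x\in S$ is lucky with respect to $A$ if there is an induced path on four vertices in $G$ with one endpoint $x$ and the remaining three vertices in $A$. A pair $(x,y)\in S\times S$ is lucky with respect to $A$ if $x$ is lucky with respect to $A$, or there exists an induced path on four vertices in $G$ with endpoints $x$ and $y$ and its two middle vertices in $A$. *)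

(* Defs.v *)
From mathcomp Require Import all_boot all_order all_algebra.
Set Implicit Arguments. Unset Strict Implicit. Unset Printing Implicit Defensive.
Import Order.TTheory GRing.Theory Num.Theory.

Section Graphs.
Variable T : finType.
Variable e : rel T.

Definition simple_graph := symmetric e /\ irreflexive e.

Definition del_rel (S : {set T}) : rel T :=
  [rel x y | [&& e x y, x \notin S & y \notin S]].

Definition component_of (S C : {set T}) : Prop :=
  exists2 v, v \notin S & C = [set u | (u \notin S) && connect (del_rel S) v u].

Definition st_separator (S : {set T}) (s t : T) : Prop :=
  [/\ s != t, s \notin S, t \notin S & ~~ connect (del_rel S) s t].

Definition minimal_st_separator (S : {set T}) (s t : T) : Prop :=
  st_separator S s t /\ forall S' : {set T}, S' \proper S -> ~ st_separator S' s t.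

Definition minimal_separator (S : {set T}) : Prop :=
  exists s t, minimal_st_separator S s t.

Definition full_component (S C : {set T}) : Prop :=
  component_of S C /\ forall x, x \in S -> exists2 y, y \in C & e x y.

Definition induced_P4 (a b c d : T) : bool :=
  [&& uniq [:: a; b; c; d], [&& e a b, e b c & e c d] &
      [&& ~~ e a c, ~~ e b d & ~~ e a d]].

Definition lucky_vertex (A : {set T}) (x : T) : bool :=
  [exists a, exists b, exists c, [&& a \in A, b \in A, c \in A & induced_P4 x a b c]].

Definition lucky_pair (A : {set T}) (x y : T) : bool :=
  lucky_vertex A x ||
  [exists a, exists b, [&& a \in A, b \in A & induced_P4 x a b y]].

End Graphs.

Definition prob_on {R : numDomainType} {T : finType} (S : {set T}) (mu : T -> R) : Prop :=
  [/\ (forall x, (0 <= mu x)%R), (forall x, x \notin S -> mu x = 0%R)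
    & (\sum_(x in S) mu x)%R = 1%R].

Definition mu_nbhd {R : numDomainType} {T : finType} (e : rel T) (S : {set T})
  (mu : T -> R) (v : T) : R := (\sum_(u in S | e v u) mu u)%R.

Definition prob_not_lucky {R : numDomainType} {T : finType} (e : rel T) (S A : {set T})
  (mu : T -> R) : R :=
  (\sum_(x in S) \sum_(y in S | ~~ lucky_pair e A x y) mu x * mu y)%R.

(* Main.v *)
Require Import Defs.
From mathcomp Require Import all_boot all_order all_algebra.
From mathcomp Require Import lra.
Import Order.TTheory GRing.Theory Num.Theory.
Set Implicit Arguments. Unset Strict Implicit.

Lemma mkP4 (T : finType) (e : rel T) : symmetric e -> irreflexive e ->
  forall a b c d, e a b -> e b c -> e c d -> ~~ e a c -> ~~ e b d -> ~~ e a d ->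
  a != d -> induced_P4 e a b c d.
Proof.
move=> Hs Hi a b c d ab bc cd nac nbd nad ad.
have neq : forall u w, e u w -> u != w.
  by move=> u w; apply: contraTneq => ->; rewrite Hi.
rewrite /induced_P4 ab bc cd nac nbd nad /= !inE !negb_or ad.
rewrite (neq _ _ ab) (neq _ _ bc) (neq _ _ cd) /= !andbT.
apply/andP; split; apply/eqP => E; subst.
- by rewrite cd in nad.
- by rewrite ab in nad.
Qed.

Lemma dominate (T : finType) (e : rel T) (S A : {set T}) :
  symmetric e -> irreflexive e ->
  (forall (P : T -> Prop) b, b \in A -> P b ->
     (forall p q, p \in A -> q \in A -> e p q -> P p -> P q) -> forall u, u \in A -> P u) ->
  (forall x, x \in S -> exists2 a, a \in A & e x a) ->
  (forall x, x \in S -> x \notin A) ->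
  forall x, x \in S -> ~~ lucky_vertex e A x ->
  forall u, u \in A -> e x u \/ exists2 w, w \in A & e x w /\ e w u.
Proof.
move=> Hs Hi Hcon Hfull Hdisj x xS nl.
have [a aA xa] := Hfull x xS.
apply: (Hcon _ a aA); first by left.
move=> p q pA qA pq [xp | [w wA [xw wp]]]; first by right; exists p.
case xq: (e x q); first by left.
case wq: (e w q); first by right; exists w.
case: (boolP (e x p)) => xp; first by right; exists p.
exfalso; move/negP: nl; apply; apply/existsP; exists w; apply/existsP; exists p.
apply/existsP; exists q; rewrite wA pA qA /=.
apply: mkP4 => //; first by rewrite wq.
  by rewrite xq.
by apply: contraNneq (Hdisj x xS) => ->.
Qed.


Lemma pairL (T : finType) (e : rel T) (A : {set T}) x y a b :
  a \in A -> b \in A -> induced_P4 e x a b y -> lucky_pair e A x y.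
Proof.
move=> aA bA P; rewrite /lucky_pair; apply/orP; right.
by apply/existsP; exists a; apply/existsP; exists b; rewrite aA bA.
Qed.

Lemma vertL (T : finType) (e : rel T) (A : {set T}) x a b c :
  a \in A -> b \in A -> c \in A -> induced_P4 e x a b c -> lucky_vertex e A x.
Proof.
move=> aA bA cA P; apply/existsP; exists a; apply/existsP; exists b.
by apply/existsP; exists c; rewrite aA bA cA.
Qed.

Lemma uniform (T : finType) (e : rel T) (A : {set T}) :
  symmetric e -> irreflexive e -> forall x w p q,
  x \notin A -> ~~ lucky_vertex e A x -> w \in A -> p \in A -> q \in A ->
  e x w -> e w p -> e p q -> ~~ e x p -> ~~ e x q -> e w q.
Proof.
move=> Hs Hi x w p q xA nl wA pA qA xw wp pq xp xq.
apply/negPn/negP => wq; move/negP: nl; apply.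
apply: (vertL wA pA qA); apply: mkP4 => //.
by apply: contraNneq xA => ->.
Qed.

Lemma nearc (T : finType) (e : rel T) (A : {set T}) :
  symmetric e -> irreflexive e -> forall x y v0 w t,
  x \notin A -> y \notin A -> x != y -> ~~ e x y -> ~~ lucky_pair e A x y ->
  v0 \in A -> w \in A -> e x w -> (if e x v0 then w == v0 else e w v0) ->
  t \in A -> e y t -> (if e y v0 then t == v0 else e t v0) ->
  e y w || e x t.
Proof.
move=> Hs Hi x y v0 w t xA yA xy nxy nL v0A wA xw Hw tA yt Ht.
have nLv : ~~ lucky_vertex e A x by move: nL; rewrite /lucky_pair negb_or => /andP[].
apply/norP => -[yw xt].
have P4 : forall a b, a \in A -> b \in A -> e x a -> e a b -> e b y ->
    ~~ e x b -> ~~ e a y -> False.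
  move=> a b aA bA xa ab b_y xb ay; move/negP: nL; apply.
  by apply: (pairL aA bA); apply: mkP4.
case: (boolP (e x v0)) => xv; rewrite ?xv in Hw; rewrite ?(negbTE xv) in Hw;
  case: (boolP (e y v0)) => yv; rewrite ?yv in Ht; rewrite ?(negbTE yv) in Ht.
- move/eqP: Hw => Ew; move/eqP: Ht => Et; subst; by rewrite xv in xt.
- move/eqP: Hw => Ew; subst w; apply: (P4 v0 t) => //; by rewrite Hs.
- move/eqP: Ht => Et; subst t; apply: (P4 w v0) => //; by rewrite Hs.
- have wt : e w t.
    by apply: (uniform Hs Hi xA nLv wA v0A tA) => //; rewrite Hs.
  by apply: (P4 w t) => //; rewrite Hs.
Qed.

Lemma farc (T : finType) (e : rel T) (S A : {set T}) :
  symmetric e -> irreflexive e ->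
  (forall (P : T -> Prop) b, b \in A -> P b ->
     (forall p q, p \in A -> q \in A -> e p q -> P p -> P q) -> forall u, u \in A -> P u) ->
  (forall x, x \in S -> exists2 a, a \in A & e x a) ->
  (forall x, x \in S -> x \notin A) ->
  forall x y g1 g2 g3, x \in S -> y \in S -> x != y -> ~~ e x y -> ~~ lucky_pair e A x y ->
  g1 \in A -> g2 \in A -> g3 \in A -> e y g1 -> e g1 g2 -> e g2 g3 ->
  (forall h, h \in A -> e y h -> ~~ e h g3) ->
  [|| e x g1, e x g2 | e x g3].
Proof.
move=> Hs Hi Hcon Hfull Hdisj x y g1 g2 g3 xS yS xy nxy nL g1A g2A g3A yg1 g12 g23 far.
have nLv : ~~ lucky_vertex e A x by move: nL; rewrite /lucky_pair negb_or => /andP[].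
apply/norP => -[x1 /norP [x2 x3]].
have xA := Hdisj x xS; have yA := Hdisj y yS.
have [xg2|[w wA [xw wg2]]] := dominate Hs Hi Hcon Hfull Hdisj xS nLv g2A; first by rewrite xg2 in x2.
have wg1 : e w g1 by apply: (uniform Hs Hi xA nLv wA g2A g1A) => //; rewrite Hs.
have wg3 : e w g3 by apply: (uniform Hs Hi xA nLv wA g2A g3A).
have yw : e y w.
  apply/negPn/negP => yw; move/negP: nL; apply.
  by apply: (pairL wA g1A); apply: mkP4 => //; rewrite Hs.
by move: (far w wA yw); rewrite wg3.
Qed.

Definition farw (T : finType) (e : rel T) (A : {set T}) (y : T) (g : T * T * T) :=
  [&& g.1.1 \in A, g.1.2 \in A, g.2 \in A, e y g.1.1, e g.1.1 g.1.2, e g.1.2 g.2 &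
      [forall h in A, e y h ==> ~~ e h g.2]].

Lemma far_exists (T : finType) (e : rel T) (S A : {set T}) :
  (forall (P : T -> Prop) b, b \in A -> P b ->
     (forall p q, p \in A -> q \in A -> e p q -> P p -> P q) -> forall u, u \in A -> P u) ->
  (forall x, x \in S -> exists2 a, a \in A & e x a) ->
  forall y v0, y \in S -> v0 \in A ->
  ~~ (e y v0 || [exists t in A, e y t && e t v0]) -> exists g, farw e A y g.
Proof.
move=> Hcon Hfull y v0 yS v0A nnear.
case: (boolP [exists g, farw e A y g]) => [/existsP//|nw]; exfalso.
have [a aA ya] := Hfull y yS.
pose P z := e y z || [exists h in A, e y h && e h z].
suff : P v0 by rewrite /P (negbTE nnear).
apply: (Hcon (fun z => P z) a aA); first by rewrite /P ya.
move=> p q pA qA pq Pp; case: (boolP (P q)) => // nPq; exfalso.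
move: Pp; rewrite /P; case: (boolP (e y p)) => yp /=.
  by move: nPq; rewrite /P negb_or => /andP[_ /existsP []]; exists p; rewrite pA yp.
case/existsP => h /andP [hA /andP [yh hp]].
move/existsP: nw; apply; exists (h, p, q); rewrite /farw /= hA pA qA yh hp pq /=.
apply/forallP => h'; apply/implyP => h'A; apply/implyP => yh'.
apply/negP => h'q; move: nPq; rewrite /P negb_or => /andP[_ /existsP []].
by exists h'; rewrite h'A yh' h'q.
by [].
Qed.

Definition npick (T : finType) (e : rel T) (A : {set T}) (v0 x : T) :=
  odflt v0 [pick w in A | e x w && (if e x v0 then w == v0 else e w v0)].

Definition gpick (T : finType) (e : rel T) (A : {set T}) (v0 y : T) : T * T * T :=
  if e y v0 || [exists t in A, e y t && e t v0] then (npick e A v0 y, npick e A v0 y, npick e A v0 y)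
  else odflt (v0, v0, v0) [pick g | farw e A y g].

Lemma npick_spec (T : finType) (e : rel T) (A : {set T}) v0 x :
  v0 \in A -> e x v0 || [exists t in A, e x t && e t v0] ->
  [/\ npick e A v0 x \in A, e x (npick e A v0 x) &
     (if e x v0 then npick e A v0 x == v0 else e (npick e A v0 x) v0)].
Proof.
move=> v0A Hn; rewrite /npick; case: pickP => [w /andP [wA /andP [xw c]]|none] /=.
  by split.
exfalso; case: (boolP (e x v0)) Hn => xv /=.
  by move: (none v0); rewrite v0A xv eqxx.
case/existsP => t /andP [tA /andP [xt tv]].
by move: (none t); rewrite tA xt (negbTE xv) tv.
Qed.

Lemma classify (T : finType) (e : rel T) (S A : {set T}) v0 :
  symmetric e -> irreflexive e ->
  (forall (P : T -> Prop) b, b \in A -> P b ->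
     (forall p q, p \in A -> q \in A -> e p q -> P p -> P q) -> forall u, u \in A -> P u) ->
  (forall x, x \in S -> exists2 a, a \in A & e x a) ->
  (forall x, x \in S -> x \notin A) -> v0 \in A ->
  forall x y, x \in S -> y \in S -> ~~ lucky_pair e A x y ->
  [|| e x y, e y (npick e A v0 x), e x (gpick e A v0 y).1.1,
      e x (gpick e A v0 y).1.2 | e x (gpick e A v0 y).2].
Proof.
move=> Hs Hi Hcon Hfull Hdisj v0A x y xS yS nL.
have nLv : ~~ lucky_vertex e A x by move: nL; rewrite /lucky_pair negb_or => /andP[].
have nx : e x v0 || [exists t in A, e x t && e t v0].
  case: (dominate Hs Hi Hcon Hfull Hdisj xS nLv v0A) => [->//|[w wA [xw wv]]].
  by apply/orP; right; apply/existsP; exists w; rewrite wA xw wv.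
have [wA xw cw] := npick_spec v0A nx.
case: (eqVneq x y) => [<-|xy]; first by rewrite xw orbT.
case: (boolP (e x y)) => //= nxy.
rewrite /gpick; case: ifP => ny /=.
  have [tA yt ct] := npick_spec v0A ny.
  have := nearc Hs Hi (Hdisj x xS) (Hdisj y yS) xy nxy nL v0A wA xw cw tA yt ct.
  by case/orP => ->; rewrite ?orbT.
have [g fg] := far_exists Hcon Hfull yS v0A (negbT ny).
case: pickP => [g' |]; last by move/(_ g); rewrite fg.
case/and5P => g1A g2A g3A yg1 /andP [g12 /andP [g23 /forallP far]].
have far' : forall h, h \in A -> e y h -> ~~ e h g'.2.
  by move=> h hA yh; move: (far h); rewrite hA yh.
case/or3P: (farc Hs Hi Hcon Hfull Hdisj xS yS xy nxy nL g1A g2A g3A yg1 g12 g23 far') => ->;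
  by rewrite ?orbT.
Qed.

Lemma comp_props (T : finType) (e : rel T) (S A : {set T}) :
  symmetric e -> component_of e S A ->
  [/\ (forall (P : T -> Prop) b, b \in A -> P b ->
     (forall p q, p \in A -> q \in A -> e p q -> P p -> P q) -> forall u, u \in A -> P u),
      (forall x, x \in S -> x \notin A) & exists v0, v0 \in A].
Proof.
move=> Hs [v vS ->]; split.
- move=> P b; rewrite inE => /andP [bS vb] Pb Hcl u; rewrite inE => /andP [uS vu].
  have rs : connect_sym (del_rel e S).
    apply: sym_connect_sym => p q; rewrite /del_rel /= Hs.
    by case: (e q p); case: (p \in S); case: (q \in S).
  have : connect (del_rel e S) b u by apply: connect_trans vu; rewrite rs.
  case/connectP => p pth ->.
  elim: p b bS vb Pb pth => [//|c p IH] b bS vb Pb /= /andP [bc pth].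
  move: bc; rewrite /del_rel /= => /and3P [ebc _ cS].
  have vc : connect (del_rel e S) v c.
    by apply: connect_trans vb (connect1 _); rewrite /del_rel /= ebc bS cS.
  apply: IH => //; apply: (Hcl b) => //; rewrite inE ?bS ?cS //.
- by move=> x xS; rewrite inE xS.
- by exists v; rewrite inE vS connect0.
Qed.

Local Open Scope ring_scope.

Lemma nbsum (R : numDomainType) (T : finType) (e : rel T) (S : {set T}) (mu : T -> R) z :
  \sum_(y in S) mu y * (e z y)%:R = mu_nbhd e S mu z.
Proof.
rewrite /mu_nbhd [RHS]big_mkcondr /=; apply: eq_bigr => y _.
by case: (e z y); rewrite ?mulr1 ?mulr0.
Qed.

Lemma dbl1 (R : numDomainType) (T : finType) (S : {set T}) (mu : T -> R) alpha
  (k : T -> T -> bool) : (forall x, 0 <= mu x) -> \sum_(x in S) mu x = 1 ->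
  (forall x, \sum_(y in S) mu y * (k x y)%:R <= alpha) ->
  \sum_(x in S) \sum_(y in S) mu x * mu y * (k x y)%:R <= alpha.
Proof.
move=> H0 H1 Hk.
apply: (@le_trans _ _ (\sum_(x in S) mu x * alpha)).
  apply: ler_sum => x _.
  have -> : \sum_(y in S) mu x * mu y * (k x y)%:R = mu x * \sum_(y in S) mu y * (k x y)%:R.
    by rewrite mulr_sumr; apply: eq_bigr => y _; rewrite mulrA.
  by apply: ler_wpM2l.
by rewrite -mulr_suml H1 mul1r.
Qed.

Lemma dbl2 (R : numDomainType) (T : finType) (S : {set T}) (mu : T -> R) alpha
  (k : T -> T -> bool) : (forall x, 0 <= mu x) -> \sum_(x in S) mu x = 1 ->
  (forall y, \sum_(x in S) mu x * (k x y)%:R <= alpha) ->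
  \sum_(x in S) \sum_(y in S) mu x * mu y * (k x y)%:R <= alpha.
Proof.
move=> H0 H1 Hk; rewrite exchange_big /=.
have -> : \sum_(y in S) \sum_(x in S) mu x * mu y * (k x y)%:R =
          \sum_(y in S) \sum_(x in S) mu y * mu x * (k x y)%:R.
  by apply: eq_bigr => y _; apply: eq_bigr => x _; rewrite (mulrC (mu x)).
by apply: (@dbl1 _ _ _ _ _ (fun y x => k x y)).
Qed.

Lemma sum_bound (R : realFieldType) (T : finType) (e : rel T) (S A : {set T})
  (mu : T -> R) alpha (f : T -> T) (g : T -> T * T * T) :
  symmetric e -> prob_on S mu -> (forall v, mu_nbhd e S mu v <= alpha) ->
  (forall x y, x \in S -> y \in S -> ~~ lucky_pair e A x y ->
     [|| e x y, e y (f x), e x (g y).1.1, e x (g y).1.2 | e x (g y).2]) ->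
  prob_not_lucky e S A mu <= 5%:R * alpha.
Proof.
move=> Hs [H0 _ H1] Ha Hc.
pose I x y : R := (e x y)%:R + (e y (f x))%:R + (e x (g y).1.1)%:R +
                  (e x (g y).1.2)%:R + (e x (g y).2)%:R.
apply: (@le_trans _ _ (\sum_(x in S) \sum_(y in S) mu x * mu y * I x y)).
  apply: ler_sum => x xS; rewrite big_mkcondr /=; apply: ler_sum => y yS.
  have mxy : 0 <= mu x * mu y by apply: mulr_ge0.
  have Ige : 0 <= I x y by rewrite /I; case: (e x y); case: (e y (f x));
    case: (e x (g y).1.1); case: (e x (g y).1.2); case: (e x (g y).2) => //=;
    rewrite ?mulr1n ?mulr0n ?addr0 ?add0r; lra.
  case: ifP => nL.
    apply: ler_peMr => //; move: (Hc x y xS yS nL); rewrite /I.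
    by case: (e x y); case: (e y (f x));
    case: (e x (g y).1.1); case: (e x (g y).1.2); case: (e x (g y).2) => //=;
    rewrite ?mulr1n ?mulr0n ?addr0 ?add0r; lra.
  by apply: mulr_ge0.
have -> : \sum_(x in S) \sum_(y in S) mu x * mu y * I x y =
   \sum_(x in S) \sum_(y in S) mu x * mu y * (e x y)%:R +
   \sum_(x in S) \sum_(y in S) mu x * mu y * (e y (f x))%:R +
   \sum_(x in S) \sum_(y in S) mu x * mu y * (e x (g y).1.1)%:R +
   \sum_(x in S) \sum_(y in S) mu x * mu y * (e x (g y).1.2)%:R +
   \sum_(x in S) \sum_(y in S) mu x * mu y * (e x (g y).2)%:R.
  rewrite -!big_split /=; apply: eq_bigr => x _; rewrite -!big_split /=.
  by apply: eq_bigr => y _; rewrite /I !mulrDr.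
have B1 := dbl1 (k:=fun x y => e x y) H0 H1 (fun x => ltac:(rewrite nbsum; apply: Ha)).
have B2 : \sum_(x in S) \sum_(y in S) mu x * mu y * (e y (f x))%:R <= alpha.
  apply: (dbl1 (k:=fun x y => e y (f x)) H0 H1) => x.
  under eq_bigr => y _ do rewrite Hs. by rewrite nbsum.
have B3 : \sum_(x in S) \sum_(y in S) mu x * mu y * (e x (g y).1.1)%:R <= alpha.
  apply: (dbl2 (k:=fun x y => e x (g y).1.1) H0 H1) => y.
  under eq_bigr => x _ do rewrite Hs. by rewrite nbsum.
have B4 : \sum_(x in S) \sum_(y in S) mu x * mu y * (e x (g y).1.2)%:R <= alpha.
  apply: (dbl2 (k:=fun x y => e x (g y).1.2) H0 H1) => y.
  under eq_bigr => x _ do rewrite Hs. by rewrite nbsum.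
have B5 : \sum_(x in S) \sum_(y in S) mu x * mu y * (e x (g y).2)%:R <= alpha.
  apply: (dbl2 (k:=fun x y => e x (g y).2) H0 H1) => y.
  under eq_bigr => x _ do rewrite Hs. by rewrite nbsum.
move: B1 B2 B3 B4 B5 => /=; lra.
Qed.

Lemma one_side (R : realFieldType) (T : finType) (e : rel T) (S A : {set T})
  (mu : T -> R) (alpha : R) :
  simple_graph e -> prob_on S mu ->
  (forall v : T, mu_nbhd e S mu v < alpha) ->
  full_component e S A -> prob_not_lucky e S A mu < 6%:R * alpha.
Proof.
move=> [Hs Hi] Hp Ha [Hcomp Hfull].
have [Hcon Hdisj [v0 v0A]] := comp_props Hs Hcomp.
have Hle : forall v, mu_nbhd e S mu v <= alpha by move=> v; apply: ltW.
have apos : 0 < alpha.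
  apply: le_lt_trans (Ha v0); rewrite /mu_nbhd; apply: sumr_ge0 => i _.
  by case: Hp.
have := sum_bound (f := npick e A v0) (g := gpick e A v0) Hs Hp Hle
  (classify Hs Hi Hcon Hfull Hdisj v0A).
move=> H; apply: le_lt_trans H _; lra.
Qed.

Unset Implicit Arguments.

Theorem lemma1 (R : realFieldType) (T : finType) (e : rel T) (S A B : {set T})
  (mu : T -> R) (alpha : R) :
  simple_graph e ->
  minimal_separator e S ->
  prob_on S mu ->
  alpha < 1 ->
  (forall v : T, mu_nbhd e S mu v < alpha) ->
  full_component e S A -> full_component e S B ->
  prob_not_lucky e S A mu < 6%:R * alpha /\ prob_not_lucky e S B mu < 6%:R * alpha.
Proof.
move=> Hg _ Hp _ Ha HA HB; split; exact: one_side Hg Hp Ha _.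
Qed.
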